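(* Let $F$ be a distribution function whose tail $\overline F=1-F$ is a normalized regularly varying function of index $-\alpha$, $\alpha>0$. Let $\delta>0$. There exists $t_4$ such that for any $0<u\le v$, any $t\ge t_4$ and any nonnegative integer $k<\alpha$, $$\int_{tv}^\infty x^k\,d\mathsf M_uF(x)\le\frac{2\alpha}{\alpha-k}\,v^k\Bigl(\frac uv\Bigr)^{\alpha-\delta}t^k\,\overline F(t).$$
   Context: For $u>0$, $\mathsf M_uF(x)=F(x/u)$ is the distribution function of $uX$ when $X$ has distribution $F$. A function $g$ on $[a,\infty)$ is normalized regularly varying with index $\rho$ if $g(t)=c\,t^\rho\exp\int_a^t\frac{\epsilon(s)}{s}ds$ with $c>0$ and $\epsilon(s)\to0$ as $s\to\infty$. *)

(* Defs.v *)
From HB Require Import structures.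
From mathcomp Require Import all_boot all_order all_algebra.
From mathcomp Require Import all_classical all_reals all_analysis.
Set Implicit Arguments. Unset Strict Implicit. Unset Printing Implicit Defensive.
Import Order.TTheory GRing.Theory Num.Theory.
Import numFieldNormedType.Exports.
Local Open Scope classical_set_scope.
Local Open Scope ring_scope.

Definition distribution_function (R : realType) (F : R -> R) : Prop :=
  [/\ {homo F : x y / x <= y},
      (forall x : R, (F z @[z --> x^'+] --> F x)),
      (F x @[x --> -oo] --> (0:R)) &
      (F x @[x --> +oo] --> (1:R))].

Definition M (R : realType) (u : R) (F : R -> R) : R -> R := fun x => F (x / u).

Definition normalized_regularly_varying (R : realType) (g : R -> R) (rho : R) : Prop :=
  exists (a c : R) (eps : R -> R),
    [/\ 0 < a, 0 < c,
        (eps s @[s --> +oo] --> 0),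
        (forall t, a <= t ->
           (lebesgue_measure : set _ -> \bar R).-integrable `[a, t] (fun s => (eps s / s)%:E)) &
        (forall t, a <= t ->
           g t = c * t `^ rho *
                 expR (Rintegral lebesgue_measure `[a, t] (fun s => eps s / s)))].

Definition stieltjes_of (R : realType) (G : R -> R)
  (nu : probability (measurableTypeR R) R) : Prop :=
  forall x : R, nu [set` `]-oo, x]] = (G x)%:E.

(* Main.v *)
Require Import Defs.
From HB Require Import structures.
From mathcomp Require Import all_boot all_order all_algebra.
From mathcomp Require Import all_classical all_reals all_analysis.
From mathcomp Require Import measurable_realfun.
From mathcomp Require Import ring lra zify.
Import Order.TTheory GRing.Theory Num.Theory.
Import numFieldNormedType.Exports.
Local Open Scope classical_set_scope.
Local Open Scope ring_scope.
Lemma int_m_over {R : realType} (m x z : R) : 0 < x -> x < z ->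
  Rintegral lebesgue_measure `[x, z] (fun s => m / s) = m * (ln z - ln x).
Proof.
move=> x0 xz.
have dF : forall s : R, 0 < s -> is_derive s 1 (fun s => m * ln s) (m * s^-1).
  move=> s s0. have := is_derive1_ln s0. move=> H. exact: is_deriveZ.
have cF : forall s : R, 0 < s -> {for s, continuous (fun s => m * ln s)}.
  move=> s s0; apply: continuousM; [exact: cvg_cst| exact: continuous_ln].
rewrite /Rintegral (@continuous_FTC2 _ _ (fun s => m * ln s)) //=.
- by rewrite mulrBr.
- apply: continuous_in_subspaceT => s; rewrite inE /= in_itv /= => /andP[xs _].
  have s0 : 0 < s by apply: lt_le_trans xs.
  apply: continuousM; first exact: cvg_cst.
  apply: continuousV; first by rewrite gt_eqF.
  exact: cvg_id.
- split.
  + move=> s; rewrite in_itv /= => /andP[xs _].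
    have s0 : 0 < s by apply: lt_trans xs.
    have := dF s s0; by case.
  + exact/cvg_at_right_filter/cF.
  + apply/cvg_at_left_filter/cF; exact: lt_trans xz.
- move=> s; rewrite in_itv /= => /andP[xs _].
  have s0 : 0 < s by apply: lt_trans xs.
  have := dF s s0; move=> [_ H]; rewrite derive1E; exact: H.
Qed.
Lemma potter {R : realType} (g : R -> R) (alpha eta : R) :
  normalized_regularly_varying g (- alpha) -> 0 < eta ->
  exists T : R, [/\ 0 < T, (forall x, T <= x -> 0 < g x) & forall x y, T <= x -> 0 <= y ->
    g (x * expR y) <= g x * expR (- (alpha - eta) * y) /\
    g x * expR (- (alpha + eta) * y) <= g (x * expR y)].
Proof.
move=> [a [c [eps [a0 c0 epsto integ form]]]] eta0.
have := epsto; move/cvgrPdist_le => /(_ eta eta0) [M [Mreal HM]].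
exists (Num.max a (M + 1)); split; first by rewrite lt_max a0.
  move=> x; rewrite ge_max => /andP[ax _]; rewrite (form x ax).
  by rewrite mulr_gt0 ?expR_gt0 // mulr_gt0 // powR_gt0 // (lt_le_trans a0 ax).
move=> x y; rewrite ge_max => /andP[ax Mx] y0.
have x0 : 0 < x by apply: lt_le_trans ax.
have [->|ypos] := eqVneq y 0.
  by rewrite expR0 !mulr1 !mulr0 expR0 !mulr1.
have {ypos} ypos : 0 < y by rewrite lt_neqAle eq_sym ypos.
set z := x * expR y.
have xz : x < z by rewrite /z ltr_pMr // expR_gt1.
have az : a <= z by apply/(le_trans ax)/ltW.
set J := Rintegral lebesgue_measure `[x, z] (fun s => eps s / s).
have IzIx : Rintegral lebesgue_measure `[a, z] (fun s => eps s / s) =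
   Rintegral lebesgue_measure `[a, x] (fun s => eps s / s) + J.
  have H := @Rintegral_itvB R (fun s => eps s / s) (BLeft a) (BRight z) x (integ z az).
  rewrite bnd_simp in H; have {}H := H ax.
  rewrite bnd_simp in H; have {}H := H (ltW xz).
  rewrite Rintegral_itv_obnd_cbnd in H; last first.
    apply: integrableS (integ z az) => //.
    by apply: subset_itvr; rewrite bnd_simp.
  by rewrite /J -H addrC subrK.
have lnz : ln z = ln x + y by rewrite /z lnM ?posrE ?expR_gt0 // expRK.
have intf : lebesgue_measure.-integrable `[x, z] (EFin \o (fun s => eps s / s)).
  apply: integrableS (integ z az) => //.
  by apply: subset_itvr; rewrite bnd_simp.
have intm : forall m : R, lebesgue_measure.-integrable `[x, z] (EFin \o (fun s : R => m / s)).
  move=> m; apply: continuous_compact_integrable; first exact: segment_compact.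
  apply: continuous_in_subspaceT => s; rewrite inE /= in_itv /= => /andP[xs _].
  have s0 : 0 < s by apply: lt_le_trans xs.
  apply: continuousM; first exact: cvg_cst.
  apply: continuousV; first by rewrite gt_eqF.
  exact: cvg_id.
have epsb : forall s, x <= s -> `|eps s| <= eta.
  move=> s xs; rewrite -normrN -(add0r (- eps s)); apply: HM.
  by apply: (lt_le_trans _ (le_trans Mx xs)); rewrite ltrDl.
have Jle : J <= eta * y.
  have -> : eta * y = Rintegral lebesgue_measure `[x, z] (fun s => eta / s).
    by rewrite int_m_over // lnz addrC addKr.
  apply: le_Rintegral => //.
  move=> s; rewrite /= in_itv /= => /andP[xs _].
  have s0 : 0 < s by apply: lt_le_trans xs.
  rewrite ler_pM2r ?invr_gt0 //.
  by have := epsb s xs; rewrite ler_norml => /andP[].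
have Jge : - (eta * y) <= J.
  have -> : - (eta * y) = Rintegral lebesgue_measure `[x, z] (fun s => (- eta) / s).
    by rewrite int_m_over // lnz addrC addKr mulNr.
  apply: le_Rintegral => //.
  move=> s; rewrite /= in_itv /= => /andP[xs _].
  have s0 : 0 < s by apply: lt_le_trans xs.
  rewrite ler_pM2r ?invr_gt0 //.
  by have := epsb s xs; rewrite ler_norml => /andP[].
have gz : g z = g x * (expR (- alpha * y) * expR J).
  rewrite (form z az) (form x ax) IzIx expRD /z powRM ?expR_ge0 ?ltW //.
  rewrite -expRM [y * _]mulrC; ring.
have gx0 : 0 <= g x.
  by rewrite (form x ax) mulr_ge0 ?expR_ge0 // mulr_ge0 ?powR_ge0 ?ltW.
rewrite gz -expRD; split.
- by apply: ler_wpM2l => //; rewrite ler_expR; lra.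
- by apply: ler_wpM2l => //; rewrite ler_expR; lra.
Qed.
Lemma nu_ray {R : realType} (G : R -> R) (nu : probability (measurableTypeR R) R) :
  stieltjes_of G nu -> forall b : R, nu [set` `]b, +oo[] = (1 - G b)%:E.
Proof.
move=> HG b.
have -> : [set` `]b, +oo[] = ~` [set` `]-oo, b]].
  by apply/seteqP; split => x /=; rewrite !in_itv /= andbT; [move=> bx; rewrite leNgt bx | rewrite leNgt => /negP /negbNE].
by rewrite probability_setC // HG.
Qed.
Definition th {R : realType} (s0 h : R) (j : nat) : R := s0 * expR ((j%:R - 1) * h).
Definition cc {R : realType} (s0 h : R) (k j : nat) : R :=
  if j is j'.+1 then th s0 h j'.+2 ^+ k - th s0 h j'.+1 ^+ k else s0 ^+ k.

Lemma th_gt0 {R : realType} (s0 h : R) j : 0 < s0 -> 0 < th s0 h j.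
Proof. by move=> s00; rewrite /th mulr_gt0 // expR_gt0. Qed.

Lemma th_lt {R : realType} (s0 h : R) j : 0 < s0 -> 0 < h -> th s0 h j < th s0 h j.+1.
Proof.
move=> s00 h0; rewrite /th ltr_pM2l // ltr_expR ltr_pM2r // ltrD2r ltr_nat; lia.
Qed.

Lemma th1 {R : realType} (s0 h : R) : th s0 h 1 = s0.
Proof. by rewrite /th subrr mul0r expR0 mulr1. Qed.

Lemma th0 {R : realType} (s0 h : R) : 0 < s0 -> 0 < h -> th s0 h 0 < s0.
Proof. by move=> s00 h0; rewrite -{2}(th1 s0 h) th_lt. Qed.

Lemma cc_ge0 {R : realType} (s0 h : R) k j : 0 < s0 -> 0 < h -> 0 <= cc s0 h k j.
Proof.
move=> s00 h0; case: j => [|j] /=; first by rewrite exprn_ge0 // ltW.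
rewrite subr_ge0 lerXn2r // ?nnegrE ?ltW ?th_gt0 //.
exact: th_lt.
Qed.

Lemma partial_dom {R : realType} (s0 h x : R) (k : nat) : 0 < s0 -> 0 < h -> s0 <= x ->
  forall n, (x <= th s0 h n.+1 -> x ^+ k <= \sum_(0 <= j < n.+1) cc s0 h k j * \1_([set` `]th s0 h j, +oo[]) x) /\
            (th s0 h n.+1 < x -> th s0 h n.+1 ^+ k <= \sum_(0 <= j < n.+1) cc s0 h k j * \1_([set` `]th s0 h j, +oo[]) x).
Proof.
move=> s00 h0 s0x; elim=> [|n [IH1 IH2]].
  rewrite big_nat1 /= indicE mem_set; last first.
    by rewrite /= in_itv /= andbT; apply: lt_le_trans s0x; exact: th0.
  rewrite mulr1 th1; split => // xs.
  by have -> : x = s0 by apply/eqP; rewrite eq_le xs s0x.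
rewrite big_nat_recr //=.
have thpos : forall j, 0 <= th s0 h j by move=> j; rewrite ltW ?th_gt0.
have thinc := th_lt s0 h n.+1 s00 h0.
have [tx|xt] := ltP (th s0 h n.+1) x.
  rewrite indicE mem_set; last by rewrite /= in_itv /= andbT.
  rewrite mulr1.
  have H := IH2 tx.
  have H2 : th s0 h n.+2 ^+ k <= \sum_(0 <= i < n.+1) cc s0 h k i * \1_([set` `]th s0 h i, +oo[]) x + (th s0 h n.+2 ^+ k - th s0 h n.+1 ^+ k).
    by lra.
  split => // xt2.
  apply: le_trans H2; apply: lerXn2r; rewrite ?nnegrE //; exact/ltW/(le_lt_trans (thpos n.+1) tx).
rewrite indicE memNset; last by rewrite /= in_itv /= andbT; apply/negP; rewrite -leNgt.
rewrite mulr0 addr0; split.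
  by move=> _; exact: IH1.
by move=> H; have := lt_le_trans H xt; rewrite ltNge (ltW thinc).
Qed.
Lemma int_series {R : realType} (nu : probability (measurableTypeR R) R) (s0 h : R) (k : nat) :
  0 < s0 -> 0 < h ->
  (\int[nu]_(x in [set` `[s0, +oo[]) (x ^+ k)%:E <=
   \sum_(j <oo) ((cc s0 h k j)%:E * nu [set` `]th s0 h j, +oo[]))%E.
Proof.
move=> s00 h0.
set D := [set` `[s0, +oo[].
set A := fun j => [set` `]th s0 h j, +oo[].
set f := fun j (x : R) => (cc s0 h k j * \1_(A j) x)%:E.
have mD : measurable D by exact: measurable_itv.
have mA : forall j, measurable (A j) by move=> j; exact: measurable_itv.
have mf : forall j, measurable_fun D (f j).
  move=> j; apply/measurable_EFinP; apply: measurable_funM => //.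
have f0 : forall j x, D x -> (0 <= f j x)%E.
  by move=> j x _; rewrite lee_fin mulr_ge0 // ?cc_ge0 // indicE; case: (_ \in _).
apply: (@le_trans _ _ (\int[nu]_(x in D) \sum_(j <oo) f j x)%E).
  apply: ge0_le_integral => //.
  - move=> x; rewrite /D /= in_itv /= andbT => s0x.
    rewrite lee_fin. have x0 : (0:R) <= x := ltW (lt_le_trans s00 s0x). exact: exprn_ge0 x0.
  - apply/measurable_EFinP; apply: measurable_funX; exact: measurable_id.
  - have := @ge0_emeasurable_sum _ _ R D f xpredT. apply => // j x Dx _; exact: f0.
  move=> x; rewrite /D /= in_itv /= andbT => s0x.
  have [n xn] : exists n, x <= th s0 h n.+1.
    exists (Num.trunc (x / (s0 * h))).+1.
    have := truncnS_gt (x / (s0 * h)).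
    set m := (Num.trunc _).+1 => Hm.
    rewrite /th -natr1 addrK.
    have sh0 : 0 < s0 * h by rewrite mulr_gt0.
    rewrite ltr_pdivrMr // in Hm.
    have E := expR_ge1Dx (m%:R * h).
    have m0 : 0 <= (m%:R : R) by [].
    nra.
  have [H _] := partial_dom s0 h x k s00 h0 s0x n.
  apply: (le_trans _ (nneseries_lim_ge n.+1 _)); last first.
    by move=> i _ _; apply: f0; rewrite /D /= in_itv /= andbT.
  by rewrite /f sumEFin lee_fin; apply: H.
rewrite integral_nneseries //.
apply: lee_nneseries.
  by move=> i _ _; apply: integral_ge0 => x Dx; apply: f0.
move=> j _; rewrite /f.
under eq_integral do rewrite EFinM.
rewrite ge0_integralZl_EFin //; try (by move=> x _; rewrite lee_fin indicE; case: (_ \in _)); try (by apply/measurable_EFinP; exact: measurable_indic); try exact: cc_ge0.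
rewrite integral_indic //.
  apply: lee_wpmul2l. by rewrite lee_fin cc_ge0. apply: measureIl.
all: try exact: measurable_itv.
apply/measurable_EFinP. apply: (@measurable_indic _ (measurableTypeR R) R D (A j)). exact: measurable_itv.
Show.
Qed.
Lemma geom_id {R : realType} (q : R) n :
  (1 - q) * \sum_(0 <= i < n) q ^+ i.+1 = q - q ^+ n.+1.
Proof.
elim: n => [|n IH]; first by rewrite big_geq // mulr0 expr1 subrr.
rewrite big_nat_recr //= mulrDr IH !exprS; ring.
Qed.

Lemma series_le {R : realType} (w : nat -> R) (W : R) :
  (forall j, 0 <= w j) -> (forall n, \sum_(0 <= j < n) w j <= W) ->
  (\sum_(j <oo) (w j)%:E <= W%:E)%E.
Proof.
move=> w0 Hw.
apply: lime_le.
  by apply: is_cvg_nneseries => n _ _; rewrite lee_fin.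
by apply: nearW => n; rewrite sumEFin lee_fin; exact: Hw.
Qed.

Lemma fin_max {R : realType} (Q : nat -> R -> Prop) :
  (forall k, exists t0 : R, forall t, t0 <= t -> Q k t) ->
  forall N, exists t0 : R, forall k, (k < N)%N -> forall t, t0 <= t -> Q k t.
Proof.
move=> H; elim=> [|N [t1 H1]]; first by exists 0.
have [t2 H2] := H N.
exists (Num.max t1 t2) => k; rewrite ltnS leq_eqVlt => /orP[/eqP -> | kN] t.
  by rewrite ge_max => /andP[_]; exact: H2.
by rewrite ge_max => /andP[t1t _]; exact: H1.
Qed.
Lemma key_ineq {R : realType} (k gam h : R) m : 0 < gam -> 0 < h -> 0 <= k ->
  (1 - (expR (k * h))^-1) * \sum_(0 <= i < m) (expR (- (gam * h)))^+i.+1 <= k / gam.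
Proof.
move=> g0 h0 k0.
set q := expR (- (gam * h)).
set S := \sum_(0 <= i < m) q ^+ i.+1.
have gid := geom_id q m; rewrite -/S in gid.
have q0 : 0 <= q by rewrite expR_ge0.
have qm : 0 <= q ^+ m.+1 by rewrite exprn_ge0.
have S0 : 0 <= S by rewrite /S sumr_ge0 // => i _; rewrite exprn_ge0.
set E := expR (gam * h).
have qE : E * q = 1 by rewrite /E /q expRxMexpNx_1.
have E1 : 1 + gam * h <= E by exact: expR_ge1Dx.
have bi : 1 - k * h <= (expR (k * h))^-1 by rewrite -expRN; have := expR_ge1Dx (- (k * h)); lra.
have H1 : (E - 1) * S <= 1.
  have : E * ((1 - q) * S) <= E * q.
    by rewrite gid ler_pM2l ?expR_gt0 //; lra.
  rewrite qE; nra.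
have H2 : gam * h * S <= 1 by nra.
have H3 : (1 - (expR (k * h))^-1) * S <= k * h * S by nra.
rewrite ler_pdivlMr //.
apply: (le_trans (ler_wpM2r (ltW g0) H3)).
nra.
Qed.
Lemma expRX {R : realType} (x : R) (n : nat) : expR x ^+ n = expR (n%:R * x).
Proof. by rewrite expRM_natl. Qed.
Lemma per_k {R : realType} (F : R -> R) (alpha delta : R) (k : nat) :
  0 < alpha -> normalized_regularly_varying (fun x => 1 - F x) (- alpha) -> 0 < delta ->
  k%:R < alpha ->
  exists t0 : R, forall t, t0 <= t -> forall u v : R, 0 < u -> u <= v ->
    forall nu : probability (measurableTypeR R) R, stieltjes_of (M u F) nu ->
    (\int[nu]_(x in [set` `[(t * v)%R, +oo[]) (x ^+ k)%:E <=
      ((2 * alpha / (alpha - k%:R)) * v ^+ k * (u / v) `^ (alpha - delta)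
        * t ^+ k * (1 - F t))%:E)%E.
Proof.
move=> a0 HRV d0 ka.
have k0 : 0 <= (k%:R : R) by [].
set Fb := fun x => 1 - F x.
set beta := alpha - k%:R.
have b0 : 0 < beta by rewrite /beta subr_gt0.
set eta := Num.min delta (beta / 2).
have e0 : 0 < eta by rewrite lt_min d0 divr_gt0.
have ed : eta <= delta by rewrite ge_min lexx.
have eb : eta <= beta / 2 by rewrite ge_min lexx orbT.
set gam := beta - eta.
have g0 : beta / 2 <= gam by rewrite /gam; lra.
set A := 2 * k%:R / beta.
have A0 : 0 <= A by rewrite /A divr_ge0 // ?mulr_ge0 // ltW.
have kA : k%:R / gam <= A.
  rewrite ler_pdivrMr; last by lra.
  have hAb : A * beta = 2 * k%:R by rewrite /A mulfVK // gt_eqF.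
  nra.
set z := (8 * (A + 1))^-1.
have z0 : 0 < z by rewrite invr_gt0; lra.
have zA : z * (8 * (A + 1)) = 1 by rewrite mulVf //; lra.
set h := z / alpha.
have h0 : 0 < h by rewrite divr_gt0.
have [T [T0 Tpos Hp]] := potter _ _ _ HRV e0.
exists (T * expR h) => t tT u v u0 uv nu Hnu.
have t0 : 0 < t by apply: lt_le_trans tT; rewrite mulr_gt0 ?expR_gt0.
have v0 : 0 < v by apply: lt_le_trans uv.
set s0 := t * v.
have s00 : 0 < s0 by rewrite mulr_gt0.
set x0 := s0 * expR (- h) / u.
have th0u : th s0 h 0 / u = x0 by rewrite /th sub0r mulN1r.
have thu : forall j, th s0 h j / u = x0 * expR (j%:R * h).
  move=> j; rewrite /th; have -> : expR ((j%:R - 1) * h) = expR (- h) * expR (j%:R * h).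
    by rewrite -expRD; congr expR; ring.
  rewrite /x0; ring.
have teT : T <= t * expR (- h).
  by rewrite expRN ler_pdivlMr ?expR_gt0.
have x0T : T <= x0.
  apply: (le_trans teT); rewrite /x0 /s0.
  have -> : t * v * expR (- h) / u = t * expR (- h) * (v / u) by ring.
  apply: ler_peMr; first by rewrite mulr_ge0 ?expR_ge0 ?ltW.
  by rewrite ler_pdivlMr // mul1r.
set P := Fb x0.
apply: le_trans (int_series nu s0 h k s00 h0) _.
rewrite (eq_eseriesr (g := fun j => (cc s0 h k j * Fb (th s0 h j / u))%:E)); last first.
  by move=> j _; rewrite (nu_ray _ _ Hnu) /M EFinM.
set W := s0 ^+ k * P * (1 + k%:R / gam).
have gpos : 0 < gam by lra.
have P0 : 0 < P by apply: Tpos.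
set b := expR (k%:R * h).
set rho := expR (- (alpha - eta) * h).
set q := expR (- (gam * h)).
have bq : b * rho = q by rewrite -expRD; congr expR; rewrite /gam /beta; ring.
have b1 : 1 <= b by apply: le_trans (expR_ge1Dx _); rewrite lerDl mulr_ge0 // ltW.
have e1 : forall n : nat, ((n.+1)%:R - 1 : R) = n%:R by move=> n; rewrite -natr1 addrK.
have term : forall i, cc s0 h k i.+1 * Fb (th s0 h i.+1 / u) <= s0 ^+ k * P * (1 - b^-1) * q ^+ i.+1.
  move=> i.
  have cci : cc s0 h k i.+1 = s0 ^+ k * (b ^+ i.+1 - b ^+ i).
    rewrite /cc /th !exprMn /b !expRX !e1 mulrBr.
    by congr (_ * expR _ - _ * expR _); rewrite -?natr1; ring.
  have Fbi : Fb (th s0 h i.+1 / u) <= P * rho ^+ i.+1.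
    rewrite thu.
    have [H _] := Hp x0 (i.+1%:R * h) x0T (mulr_ge0 (ler0n _ _) (ltW h0)).
    apply: (le_trans H); rewrite /rho expRX.
    by rewrite le_eqVlt; apply/orP; left; apply/eqP; congr (_ * expR _); ring.
  rewrite cci.
  have bb : 0 <= b ^+ i.+1 - b ^+ i.
    by rewrite subr_ge0 exprS ler_peMl // exprn_ge0 // (le_trans ler01 b1).
  apply: (le_trans (ler_wpM2l (mulr_ge0 (exprn_ge0 _ (ltW s00)) bb) Fbi)).
  have bn0 : b != 0 by rewrite gt_eqF // (lt_le_trans ltr01 b1).
  rewrite -bq exprMn exprS.
  rewrite le_eqVlt; apply/orP; left; apply/eqP; rewrite exprMn !exprS; field; exact: bn0.
have Hc : expR ((alpha + eta) * h) * (1 + k%:R / gam) <= 2 * alpha / beta.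
  have -> : 2 * alpha / beta = 2 + A by rewrite /A /beta; field; rewrite gt_eqF.
  have E1 : expR ((alpha + eta) * h) <= expR (2 * z).
    have bdef : beta = alpha - k%:R by [].
    have ea : eta <= alpha by lra.
    have hz : h * alpha = z by rewrite /h mulfVK // gt_eqF.
    rewrite ler_expR; nra.
  have E2 : expR (2 * z) <= 1 + 4 * z.
    have := expR_ge1Dx (- (2 * z)); have := expRxMexpNx_1 (2 * z).
    have := expR_gt0 (2 * z); have z8 : z <= 1/8 by nra.
    nra.
  have := expR_gt0 ((alpha + eta) * h).
  nra.
have HP : P <= Fb t * expR ((alpha + eta) * h) * (u / v) `^ (alpha - delta).
  set L := ln (v / u).
  have vu1 : 1 <= v / u by rewrite ler_pdivlMr // mul1r.
  have vu0 : 0 < v / u by rewrite divr_gt0.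
  have L0 : 0 <= L by exact: ln_ge0.
  have x0e : x0 = t * expR (- h) * expR L.
    by rewrite /L lnK ?posrE // /x0 /s0; field; rewrite gt_eqF.
  have [H1 _] := Hp _ L teT L0.
  have [_ H2] := Hp _ h teT (ltW h0).
  have tt : t * expR (- h) * expR h = t by rewrite -mulrA -expRD addNr expR0 mulr1.
  rewrite tt in H2.
  have Fte0 : 0 <= Fb (t * expR (- h)) by exact/ltW/Tpos.
  have H3 : Fb (t * expR (- h)) <= Fb t * expR ((alpha + eta) * h).
    have := ler_wpM2r (expR_ge0 ((alpha + eta) * h)) H2.
    by rewrite -mulrA -expRD mulNr addNr expR0 mulr1.
  have H4 : expR (- (alpha - eta) * L) <= (u / v) `^ (alpha - delta).
    rewrite /powR gt_eqF ?divr_gt0 // ler_expR.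
    have -> : ln (u / v) = - L by rewrite /L -lnV ?posrE // invf_div.
    nra.
  rewrite /P x0e; apply: (le_trans H1).
  apply: (le_trans (ler_wpM2l Fte0 H4)).
  by rewrite ler_wpM2r // powR_ge0.
apply: (@le_trans _ _ W%:E); last first.
  rewrite lee_fin /W /s0 exprMn.
  have Fbt0 : 0 <= Fb t.
    apply/ltW/Tpos; apply: le_trans teT _; apply: ler_piMr; first exact: ltW t0.
    by rewrite expR_le1 oppr_le0 ltW.
  have Q0 : 0 <= (u / v) `^ (alpha - delta) by exact: powR_ge0.
  have G0 : 0 <= 1 + k%:R / gam by rewrite addr_ge0 // divr_ge0 // ltW.
  apply: (@le_trans _ _ (t ^+ k * v ^+ k * (Fb t * expR ((alpha + eta) * h) * (u / v) `^ (alpha - delta)) * (1 + k%:R / gam))).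
    by rewrite ler_wpM2r // ler_wpM2l // mulr_ge0 // exprn_ge0 // ltW.
  have -> : t ^+ k * v ^+ k * (Fb t * expR ((alpha + eta) * h) * (u / v) `^ (alpha - delta)) * (1 + k%:R / gam)
     = (expR ((alpha + eta) * h) * (1 + k%:R / gam)) * (v ^+ k * (u / v) `^ (alpha - delta) * t ^+ k * Fb t) by ring.
  rewrite -/beta.
  have -> : 2 * alpha / beta * v ^+ k * (u / v) `^ (alpha - delta) * t ^+ k * (1 - F t)
     = 2 * alpha / beta * (v ^+ k * (u / v) `^ (alpha - delta) * t ^+ k * Fb t) by rewrite /Fb; ring.
  apply: ler_wpM2r => //.
  by rewrite !mulr_ge0 // exprn_ge0 // ltW.
apply: series_le.
  move=> j; rewrite mulr_ge0 ?cc_ge0 // ltW // /Fb; apply: Tpos.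
  rewrite thu; apply: (le_trans x0T); apply: ler_peMr; first exact: ltW (lt_le_trans T0 x0T).
  by apply: le_trans (expR_ge1Dx _); rewrite lerDl mulr_ge0 // ltW.
case=> [|m].
  rewrite big_geq // /W; apply: mulr_ge0; first by apply: mulr_ge0; [exact: exprn_ge0 (ltW s00) | exact: ltW P0].
  by rewrite addr_ge0 // divr_ge0 // ltW.
rewrite big_nat_recl //.
have -> : cc s0 h k 0 * Fb (th s0 h 0 / u) = s0 ^+ k * P by rewrite th0u.
apply: (@le_trans _ _ (s0 ^+ k * P + \sum_(0 <= i < m) s0 ^+ k * P * (1 - b^-1) * q ^+ i.+1)).
  by rewrite lerD2l; apply: ler_sum => i _; exact: term.
have KI := key_ineq k%:R gam h m gpos h0 k0.
rewrite -/q -/b in KI.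
have -> : \sum_(0 <= i < m) s0 ^+ k * P * (1 - b^-1) * q ^+ i.+1 = s0 ^+ k * P * ((1 - b^-1) * \sum_(0 <= i < m) q ^+ i.+1).
  by rewrite [RHS]mulrA mulr_sumr.
have PP : 0 <= s0 ^+ k * P by rewrite mulr_ge0 ?exprn_ge0 // ltW.
rewrite /W; move: PP KI; set X := s0 ^+ k * P; set Y := (1 - b^-1) * _.
move=> PP KI; rewrite -{1}(mulr1 X) -mulrDr; apply: ler_wpM2l => //.
by rewrite lerD2l.
Qed.
Theorem lemma5p3p3 (R : realType) (F : R -> R) (alpha delta : R) :
  distribution_function F ->
  0 < alpha ->
  normalized_regularly_varying (fun x => 1 - F x) (- alpha) ->
  0 < delta ->
  exists t4 : R, forall (u v t : R) (k : nat),
    0 < u -> u <= v -> t4 <= t -> (k%:R < alpha) ->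
    forall nu : probability (measurableTypeR R) R, stieltjes_of (M u F) nu ->
    (\int[nu]_(x in [set` `[(t * v)%R, +oo[]) (x ^+ k)%:E <=
      ((2 * alpha / (alpha - k%:R)) * v ^+ k * (u / v) `^ (alpha - delta)
        * t ^+ k * (1 - F t))%:E)%E.
Proof.
move=> _ a0 HRV d0.
pose Q := fun (k : nat) (t : R) => k%:R < alpha -> forall u v : R, 0 < u -> u <= v ->
    forall nu : probability (measurableTypeR R) R, stieltjes_of (M u F) nu ->
    (\int[nu]_(x in [set` `[(t * v)%R, +oo[]) (x ^+ k)%:E <=
      ((2 * alpha / (alpha - k%:R)) * v ^+ k * (u / v) `^ (alpha - delta)
        * t ^+ k * (1 - F t))%:E)%E.
have HQ : forall k, exists t0 : R, forall t, t0 <= t -> Q k t.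
  move=> k; have [ka|ak] := ltP (k%:R : R) alpha.
    have [t0 Ht0] := per_k F alpha delta k a0 HRV d0 ka.
    by exists t0 => t tt _; exact: Ht0.
  by exists 0 => t _ ka; exfalso; move: ka; rewrite ltNge ak.
have [t4 Ht4] := fin_max Q HQ (Num.trunc alpha).+1.
exists t4 => u v t k u0 uv tt ka nu Hnu.
apply: (Ht4 k) => //.
rewrite ltnS leqNgt; apply/negP => Nk.
have := truncnS_gt alpha.
have : ((Num.trunc alpha).+1%:R : R) <= k%:R by rewrite ler_nat.
lra.
Qed.
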